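(* Let $\mathcal{U}$ and $\mathcal{C}$ be finite-dimensional vector spaces over a common finite field, let $\Theta:\mathcal{U}\to\mathcal{S}_=(\mathcal{H}_{Y_{[1:L]}})$, $u\mapsto\rho^u_{Y_{[1:L]}}$, be a classical-quantum channel, and let $\mathbb{A}\subseteq2^{[1:L]}$. Let $U\sim\tilde P_U$ with $\mathbb{V}(\tilde P_U,P^U_U)\le\epsilon'$, where $P^U_U$ is uniform on $\mathcal{U}$. Suppose there is a source code for $U$ with compound quantum side information $(\rho^U_{Y_{\mathcal{A}}})_{\mathcal{A}\in\mathbb{A}}$ consisting of a linear encoder $g:\mathcal{U}\to\mathcal{C}$ and decoders $h_{\mathcal{A}}$ ($\mathcal{A}\in\mathbb{A}$), each of which given $c\in\mathcal{C}$ performs a measurement on $\mathcal{H}_{Y_{\mathcal{A}}}$ with outcomes in $\mathcal{U}$, such that $\max_{\mathcal{A}\in\mathbb{A}}\Pr_{U\sim\tilde P_U}[h_{\mathcal{A}}(\rho^U_{Y_{\mathcal{A}}},g(U))\ne U]\le\epsilon''$. Then, for a secret set $\mathcal{S}$ with $|\mathcal{S}|=|\mathcal{U}|/|\mathcal{C}|$ and $S$ uniform on $\mathcal{S}$, there exist encoders $\mathsf{Enc}_c:\mathcal{S}\to\mathcal{U}$ and decoding measurements $\mathsf{Dec}_{c,\mathcal{A}}$ on $\mathcal{H}_{Y_{\mathcal{A}}}$ with outcomes in $\mathcal{S}$, for $c\in\mathcal{C}$, $\mathcal{A}\in\mathbb{A}$, such that $$\max_{\mathcal{A}\in\mathbb{A}}\sum_{c\in\mathcal{C}}\frac1{|\mathcal{C}|}\bar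 P^{c,\mathcal{A}}_e\le\epsilon'+\epsilon'',\qquad \bar P^{c,\mathcal{A}}_e=\mathbb{E}_S\Big[\Pr\big[\mathsf{Dec}_{c,\mathcal{A}}(\rho^{\mathsf{Enc}_c(S)}_{Y_{\mathcal{A}}})\ne S\big]\Big].$$
   Context: $\mathcal{H}_{Y_{[1:L]}}=\mathcal{H}_{Y_1}\otimes\cdots\otimes\mathcal{H}_{Y_L}$ (finite-dimensional), $\mathcal{S}_=(\mathcal{H})$ is the set of density operators, and $\rho^u_{Y_{\mathcal{A}}}$ is the reduced state on $Y_l$, $l\in\mathcal{A}$. The variational distance is $\mathbb{V}(p,q)=\sum_x|p(x)-q(x)|$. *)

(* Defs.v *)
From HB Require Import structures.
From mathcomp Require Import all_boot all_order all_algebra all_field.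
Set Implicit Arguments. Unset Strict Implicit. Unset Printing Implicit Defensive.
Import Order.TTheory GRing.Theory Num.Theory.
Local Open Scope ring_scope.

(* Complex scalars: an arbitrary numClosedFieldType C (e.g. the complex numbers).
   Hilbert spaces are given by their finite orthonormal bases (finTypes);
   operators on C^T are represented by their matrix entries T -> T -> C. *)
Definition op (C : Type) (T : finType) := T -> T -> C.

Section Quantum.
Variable C : numClosedFieldType.

Definition psd (T : finType) (M : op C T) : Prop :=
  forall v : T -> C, 0 <= \sum_i \sum_j (v i)^* * M i j * v j.

Definition density (T : finType) (rho : op C T) : Prop :=
  psd rho /\ \sum_i rho i i = 1.

Definition trmul (T : finType) (M N : op C T) : C :=
  \sum_i \sum_j M i j * N j i.

Definition povm (T O : finType) (M : O -> op C T) : Prop :=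
  (forall o, psd (M o)) /\ (forall i j, \sum_o M o i j = (i == j)%:R).

Definition is_distr (T : finType) (p : T -> C) : Prop :=
  (forall x, 0 <= p x) /\ \sum_x p x = 1.

Definition uniform (T : finType) : T -> C := fun _ => (#|T|%:R)^-1.

Definition vdist (T : finType) (p q : T -> C) : C := \sum_x `|p x - q x|.
End Quantum.

(* Composite system H_{Y_1} (x) ... (x) H_{Y_L}, dim H_{Y_l} = d l. *)
Definition full_basis (L : nat) (d : 'I_L -> nat) : finType :=
  {dffun forall l : 'I_L, 'I_(d l)}.

(* basis of H_{Y_A} = (x)_{l in A} H_{Y_l} *)
Definition sub_basis (L : nat) (d : 'I_L -> nat) (A : {set 'I_L}) : finType :=
  {dffun forall l : {x : 'I_L | x \in A}, 'I_(d (val l))}.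

Definition restr (L : nat) (d : 'I_L -> nat) (A : {set 'I_L})
  (x : full_basis d) : sub_basis d A :=
  finfun (fun l : {x : 'I_L | x \in A} => x (val l)).

Definition ptrace {C : numClosedFieldType} {L : nat} {d : 'I_L -> nat}
  (A : {set 'I_L}) (rho : op C (full_basis d)) : op C (sub_basis d A) :=
  fun a b => \sum_(x : full_basis d) \sum_(y : full_basis d |
      [&& restr A x == a, restr A y == b & [forall l, (l \notin A) ==> (x l == y l)]])
      rho x y.
Arguments ptrace {C L d} A rho _ _.
Arguments restr {L d} A x.

(* Main.v *)
Require Import Defs.
From HB Require Import structures.
From mathcomp Require Import all_boot all_order all_algebra all_field.
From mathcomp Require Import zify ring lra.
Import Order.TTheory GRing.Theory Num.Theory.
Local Open Scope ring_scope.

Section Q.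
Variable C : numClosedFieldType.
Variable T : finType.

Definition Bf (N : op C T) (v w : T -> C) := \sum_i \sum_j (v i)^* * N i j * w j.
Definition dl (p : T) (t : C) := fun x : T => (x == p)%:R * t.

Lemma sum_ind (f : T -> C) i : \sum_j (j == i)%:R * f j = f i.
Proof.
rewrite (bigD1 i) //= eqxx mul1r big1 ?addr0 // => j /negPf ->; by rewrite mul0r.
Qed.

Lemma BD (N : op C T) v w : Bf N (fun x => v x + w x) (fun x => v x + w x) =
  Bf N v v + Bf N v w + Bf N w v + Bf N w w.
Proof.
rewrite /Bf -!big_split; apply: eq_bigr => i _ /=; rewrite -!big_split; apply: eq_bigr => j _ /=.
rewrite rmorphD /=; ring.
Qed.

Lemma Bdr (N : op C T) v p t : Bf N v (dl p t) = (\sum_i (v i)^* * N i p) * t.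
Proof.
rewrite /Bf mulr_suml; apply: eq_bigr => i _; rewrite -(sum_ind (fun j => (v i)^* * N i j * t) p).
by apply: eq_bigr => j _; rewrite /dl; ring.
Qed.

Lemma Bdl (N : op C T) v p t : Bf N (dl p t) v = t^* * \sum_j N p j * v j.
Proof.
rewrite /Bf -(sum_ind (fun i => t^* * \sum_j N i j * v j) p).
apply: eq_bigr => i _; rewrite /dl rmorphM /= rmorph_nat !mulr_sumr; apply: eq_bigr => j _; ring.
Qed.

Lemma Bdd (N : op C T) i j a b : Bf N (dl i a) (dl j b) = a^* * N i j * b.
Proof.
rewrite Bdl -mulrA; congr (_ * _); rewrite -[RHS](sum_ind (fun x => N i x * b) j).
by apply: eq_bigr => x _; rewrite /dl; ring.
Qed.

Lemma Q2 (N : op C T) i j a b :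
  Bf N (fun x => dl i a x + dl j b x) (fun x => dl i a x + dl j b x) =
  a^* * N i i * a + a^* * N i j * b + b^* * N j i * a + b^* * N j j * b.
Proof. by rewrite BD !Bdd. Qed.

Lemma psd_diag (N : op C T) : psd N -> forall i, 0 <= N i i.
Proof.
move=> hN i; have := hN (fun x => dl i 1 x + dl i 0 x).
by rewrite -/(Bf _ _ _) Q2 rmorph0 rmorph1 !(mulr0, mul0r, mul1r, mulr1, addr0).
Qed.

Lemma psd_herm (N : op C T) : psd N -> forall i j, N j i = (N i j)^*.
Proof.
move=> hN i j.
have dI := psd_diag _ hN i; have dJ := psd_diag _ hN j.
have E1 : (N i j)^* + (N j i)^* = N i j + N j i.
  have := hN (fun x => dl i 1 x + dl j 1 x).
  rewrite -/(Bf _ _ _) Q2 rmorph1 !(mul1r, mulr1) => /geC0_conj.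
  rewrite !rmorphD /= (geC0_conj dI) (geC0_conj dJ) => E.
  have : (N i i + ((N i j)^* + (N j i)^*)) + N j j = (N i i + (N i j + N j i)) + N j j.
    by rewrite !addrA E.
  by move/addIr/addrI.
have E2 : (N j i)^* - (N i j)^* = N i j - N j i.
  have := hN (fun x => dl i 1 x + dl j 'i x).
  rewrite -/(Bf _ _ _) Q2 rmorph1 conjCi !(mul1r, mulr1).
  have -> : N i i + N i j * 'i + - 'i * N j i + - 'i * N j j * 'i =
    N i i + N j j * (- ('i ^+ 2)) + 'i * (N i j - N j i) by ring.
  rewrite sqrCi opprK mulr1 => /geC0_conj.
  rewrite !rmorphD /= rmorphM /= rmorphB /= conjCi (geC0_conj dI) (geC0_conj dJ) => E.
  have : 'i * ((N j i)^* - (N i j)^*) = 'i * (N i j - N j i).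
    rewrite -(addrI _ E); ring.
  by move/(mulfI (neq0Ci C)).
have : 2 * (N j i)^* = 2 * N i j.
  have -> : 2 * (N j i)^* = ((N i j)^* + (N j i)^*) + ((N j i)^* - (N i j)^*) by ring.
  by rewrite E1 E2; ring.
have two : (2 : C) != 0 by rewrite pnatr_eq0.
by move/(mulfI two) => <-; rewrite conjCK.
Qed.

Lemma trmul0 (M N : op C T) : (forall i j, N i j = 0) -> trmul M N = 0.
Proof. by move=> h; rewrite /trmul big1 // => i _; rewrite big1 // => j _; rewrite h mulr0. Qed.

Lemma row0 (N : op C T) p : psd N -> N p p = 0 -> forall j, N p j = 0.
Proof.
move=> hN a0 j; apply/eqP/negP => /negP xnz.
have dJ := psd_diag _ hN j.
pose x := N p j; pose r := N j j.
have hx : N j p = x^* by rewrite (psd_herm _ hN p j).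
have := hN (fun y => dl p (- (r + 1) / x^*) y + dl j 1 y).
rewrite -/(Bf _ _ _) Q2 a0 hx rmorph1 !(mulr0, mul0r, add0r, mulr1).
rewrite rmorphM /= rmorphN /= fmorphV /= conjCK rmorphD /= rmorph1 (geC0_conj dJ).
have xc : x^* != 0 by rewrite conjC_eq0.
rewrite -/x -/r !mul1r.
have -> : - (r + 1) / x * x + x^* * (- (r + 1) / x^*) + r = - (r + 2).
  rewrite divfK // [x^* * _]mulrC divfK //; ring.
rewrite oppr_ge0 => H.
have h2 : 0 < r + 2 by apply: ltr_wpDl => //; rewrite ltr0n.
by have := lt_le_trans h2 H; rewrite ltxx.
Qed.

Definition schur (N : op C T) p : op C T := fun i j => N i j - N i p * N p j / N p p.

Lemma conj_y (N : op C T) p v : psd N ->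
  (\sum_j N p j * v j)^* = \sum_i (v i)^* * N i p.
Proof.
move=> hN; rewrite rmorph_sum; apply: eq_bigr => i _.
by rewrite rmorphM /= -(psd_herm _ hN p i) mulrC.
Qed.

Lemma schur_psd (N : op C T) p : psd N -> N p p != 0 -> psd (schur N p).
Proof.
move=> hN anz v.
set a := N p p; set y := \sum_j N p j * v j.
have hy := conj_y N p v hN; rewrite -/y in hy.
have ar : a^* = a by rewrite geC0_conj // psd_diag.
have e1 : Bf (schur N p) v v = Bf N v v - y^* * y / a.
  rewrite /Bf hy mulr_suml mulr_suml -sumrB; apply: eq_bigr => i _.
  rewrite /y mulr_sumr mulr_suml -sumrB; apply: eq_bigr => j _.
  rewrite /schur -/a; ring.
have e2 : Bf N (fun x => v x + dl p (- y / a) x) (fun x => v x + dl p (- y / a) x)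
    = Bf N v v - y^* * y / a.
  rewrite BD Bdr Bdl Bdd -/y -hy -/a rmorphM /= rmorphN /= fmorphV /= ar.
  by field.
change (0 <= Bf (schur N p) v v); rewrite e1 -e2; exact: hN.
Qed.

Lemma key (M N : op C T) : psd M -> psd N -> 0 <= trmul M N.
Proof.
move=> hM.
suff H : forall n (P : {set T}) (N : op C T), (#|P| <= n)%N -> psd N ->
   (forall i j, i \notin P -> N i j = 0) -> (forall i j, j \notin P -> N i j = 0) ->
   0 <= trmul M N.
  by move=> hN; apply: (H _ setT) => // i j; rewrite inE.
elim=> [|n IH] P {}N hP hN h1 h2.
  move: hP; rewrite leqn0 cards_eq0 => /eqP P0.
  by rewrite trmul0 // => i j; apply: h1; rewrite P0 inE.
have [P0 | [p pP]] := set_0Vmem P.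
  by rewrite trmul0 // => i j; apply: h1; rewrite P0 inE.
have hP' : (#|P :\ p| <= n)%N by move: hP; rewrite (cardsD1 p P) pP add1n ltnS.
have inD : forall i, i \notin P :\ p -> i = p \/ i \notin P.
  by move=> i; rewrite in_setD1 negb_and negbK => /orP [/eqP ->|]; [left | right].
have [a0 | anz] := eqVneq (N p p) 0.
  have r0 := row0 N p hN a0.
  have c0 : forall j, N j p = 0 by move=> j; rewrite (psd_herm _ hN p j) r0 rmorph0.
  apply: (IH (P :\ p)) => // i j /inD [-> // | hi]; [exact: h1 | exact: h2].
set a := N p p.
have a0 : 0 < a by rewrite lt0r anz psd_diag.
have -> : trmul M N = trmul M (schur N p) + Bf M (fun i => N i p) (fun i => N i p) / a.
  rewrite /trmul /Bf mulr_suml -big_split; apply: eq_bigr => i _ /=.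
  rewrite mulr_suml -big_split; apply: eq_bigr => j _ /=.
  rewrite -(psd_herm _ hN i p) /schur -/a; ring.
apply: addr_ge0; last by apply: divr_ge0; [exact: hM | exact: ltW].
apply: (IH (P :\ p)) => //; first exact: schur_psd.
  move=> i j /inD [-> | hi]; rewrite /schur -/a.
    by rewrite mulrAC divff // mul1r subrr.
  by rewrite (h1 i j hi) (h1 i p hi) !mul0r subrr.
move=> i j /inD [-> | hj]; rewrite /schur -/a.
  by rewrite -mulrA mulrC divff ?mul1r ?subrr.
by rewrite (h2 i j hj) (h2 p j hj) mulr0 mul0r subrr.
Qed.

Lemma povm_trsum (O : finType) (Mo : O -> op C T) (sg : op C T) :
  povm Mo -> \sum_o trmul (Mo o) sg = \sum_i sg i i.
Proof.
move=> [_ hc]; rewrite /trmul exchange_big; apply: eq_bigr => i _ /=.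
rewrite exchange_big /=.
rewrite -[RHS](sum_ind (fun j => sg j i) i).
apply: eq_bigr => j _; rewrite -mulr_suml hc eq_sym //.
Qed.

Lemma Bf_sum (O : finType) (P : pred O) (Mo : O -> op C T) v w :
  Bf (fun i j => \sum_(o | P o) Mo o i j) v w = \sum_(o | P o) Bf (Mo o) v w.
Proof.
rewrite /Bf [RHS]exchange_big; apply: eq_bigr => i _ /=; rewrite [RHS]exchange_big; apply: eq_bigr => j _ /=.
by rewrite mulr_sumr mulr_suml.
Qed.

Lemma psd_sum (O : finType) (P : pred O) (Mo : O -> op C T) :
  (forall o, P o -> psd (Mo o)) -> psd (fun i j => \sum_(o | P o) Mo o i j).
Proof.
move=> H v; change (0 <= Bf (fun i j => \sum_(o | P o) Mo o i j) v v).
by rewrite Bf_sum; apply: sumr_ge0 => o Po; apply: H.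
Qed.

Lemma trmul_sum (O : finType) (P : pred O) (Mo : O -> op C T) sg :
  trmul (fun i j => \sum_(o | P o) Mo o i j) sg = \sum_(o | P o) trmul (Mo o) sg.
Proof.
rewrite /trmul [RHS]exchange_big; apply: eq_bigr => i _ /=; rewrite [RHS]exchange_big; apply: eq_bigr => j _ /=.
by rewrite mulr_suml.
Qed.

End Q.
Arguments Bf {C T}.
Arguments dl {C T}.
Arguments sum_ind {C T}.
Arguments key {C T}.
Arguments povm_trsum {C T O}.
Arguments psd_diag {C T}.
Arguments psd_sum {C T O}.
Arguments trmul_sum {C T O}.
Section PT.
Variables (C : numClosedFieldType) (L : nat) (d : 'I_L -> nat) (A : {set 'I_L}).

Lemma exch3 {I J K : finType} (F : I -> J -> K -> C) :
  \sum_i \sum_j \sum_k F i j k = \sum_j \sum_k \sum_i F i j k.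
Proof. rewrite exchange_big; apply: eq_bigr => j _; exact: exchange_big. Qed.

Lemma exch4 {I J K K' : finType} (F : I -> J -> K -> K' -> C) :
  \sum_i \sum_j \sum_k \sum_l F i j k l = \sum_k \sum_l \sum_i \sum_j F i j k l.
Proof.
rewrite exch3 exchange_big; apply: eq_bigr => k _.
rewrite (exch3 (fun j i l => F i j k l)) exchange_big /=.
by [].
Qed.

Lemma agreeE (x y : full_basis d) :
  [forall l, (l \notin A) ==> (x l == y l)] = (restr (~:A) x == restr (~:A) y).
Proof.
apply/forallP/eqP => [H | /ffunP H l].
  apply/ffunP => l; rewrite !ffunE; have := H (val l).
  by have := valP l; rewrite inE => -> /eqP.
apply/implyP => lA; have lA' : l \in ~: A by rewrite inE.
by have := H (exist _ l lA'); rewrite /restr !ffunE /= => ->.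
Qed.

Lemma restr_eq (x y : full_basis d) :
  (restr A x == restr A y) && (restr (~:A) x == restr (~:A) y) = (x == y).
Proof.
apply/andP/eqP => [[/eqP/ffunP H1 /eqP/ffunP H2] | ->]; last by split.
apply/ffunP => l; case: (boolP (l \in A)) => lA.
  by have := H1 (exist _ l lA); rewrite /restr !ffunE.
have lA' : l \in ~: A by rewrite inE.
by have := H2 (exist _ l lA'); rewrite /restr !ffunE.
Qed.


Local Notation ag x y := [forall l, (l \notin A) ==> (x l == y l)].

Lemma ptrace_tr (rho : op C (full_basis d)) :
  \sum_a ptrace A rho a a = \sum_x rho x x.
Proof.
rewrite /ptrace.
have inner : forall x y : full_basis d,
  \sum_(a : sub_basis d A) (if [&& restr A x == a, restr A y == a & ag x y] then rho x y else 0)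
   = if y == x then rho x y else 0.
  move=> x y; rewrite (bigD1 (restr A x)) //= eqxx /= big1 ?addr0; last first.
    by move=> a /negbTE; rewrite eq_sym => ->.
  by rewrite agreeE [restr A y == _]eq_sym restr_eq [y == x]eq_sym.
transitivity (\sum_(a : sub_basis d A) \sum_x \sum_y
   (if [&& restr A x == a, restr A y == a & ag x y] then rho x y else 0)).
  by apply: eq_bigr => a _; apply: eq_bigr => x _; rewrite big_mkcond.
rewrite exch3; apply: eq_bigr => x _.
under eq_bigr do rewrite inner.
by rewrite -big_mkcond big_pred1_eq.
Qed.

Lemma ptrace_psd (rho : op C (full_basis d)) : psd rho -> psd (ptrace A rho).
Proof.
move=> hr v; change (0 <= Bf (ptrace A rho) v v).
pose w (z : sub_basis d (~: A)) := fun x : full_basis d => (restr (~:A) x == z)%:R * v (restr A x).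
have -> : Bf (ptrace A rho) v v = \sum_z Bf rho (w z) (w z).
  transitivity (\sum_x \sum_y (restr (~:A) y == restr (~:A) x)%:R *
      ((v (restr A x))^* * rho x y * v (restr A y))).
    rewrite /Bf /ptrace.
    transitivity (\sum_(a : sub_basis d A) \sum_(b : sub_basis d A) \sum_x \sum_y
       (if [&& restr A x == a, restr A y == b & ag x y] then (v a)^* * rho x y * v b else 0)).
      apply: eq_bigr => a _; apply: eq_bigr => b _.
      rewrite mulr_sumr mulr_suml; apply: eq_bigr => x _.
      rewrite mulr_sumr mulr_suml big_mkcond; apply: eq_bigr => y _.
      by case: ifP; rewrite ?mulr0 ?mul0r // mulrA.
    rewrite exch4; apply: eq_bigr => x _; apply: eq_bigr => y _.
    rewrite (bigD1 (restr A x)) //= [X in _ + X]big1 ?addr0; last first.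
      by move=> a hne; rewrite big1 // => b _; rewrite [restr A x == a]eq_sym (negbTE hne).
    rewrite (bigD1 (restr A y)) //= [X in _ + X]big1 ?addr0; last first.
      by move=> b hne; rewrite [restr A y == b]eq_sym (negbTE hne) andbF.
    rewrite !eqxx /= agreeE eq_sym.
    by case: (_ == _); rewrite ?mul1r ?mul0r.
  rewrite /Bf exch3; apply: eq_bigr => x _; apply: eq_bigr => y _.
  rewrite (bigD1 (restr (~:A) x)) //= big1 ?addr0; last first.
    by move=> z /negbTE hne; rewrite /w eq_sym hne mul0r rmorph0 !mul0r.
  rewrite /w eqxx mul1r; ring.
by apply: sumr_ge0 => z _; apply: hr.
Qed.

End PT.


Lemma card_inj_ex (A B : finType) : (#|A| <= #|B|)%N -> exists f : A -> B, injective f.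
Proof.
move=> H; exists (fun a => enum_val (widen_ord H (enum_rank a))).
move=> x y /enum_val_inj /(congr1 val) /= /ord_inj /enum_rank_inj; done.
Qed.

Lemma comb (F : finFieldType) m k (g : {linear 'rV[F]_m -> 'rV[F]_k}) (S : finType)
  (HS : (#|S| * #|'rV[F]_k| = #|'rV[F]_m|)%N) :
  exists (psi : 'rV[F]_k -> S -> 'rV[F]_m) (gam : 'rV[F]_k -> 'rV[F]_k),
   (forall c s, g (psi c s) = gam c) /\
   (forall c s c' s', psi c s = psi c' s' -> c = c' /\ s = s').
Proof.
pose f := linfun g.
have dimsum : (\dim (lker f) + \dim (limg f) = m)%N.
  have := limg_ker_dim f fullv; rewrite capfv dimvf dim_matrix => ->; lia.
have rk : (\dim (limg f) <= k)%N.
  have := dimvS (subvf (limg f)); rewrite dimvf dim_matrix; lia.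
pose q := (#|F| ^ (k - \dim (limg f)))%N.
have cim : #|{: {x : 'rV[F]_k | x \in limg f}}| = (#|F| ^ \dim (limg f))%N.
  by rewrite card_sig card_vspace.
have cker : #|{: {x : 'rV[F]_m | x \in lker f}}| = (#|F| ^ \dim (lker f))%N.
  by rewrite card_sig card_vspace.
have F0 : (0 < #|F|)%N by apply/card_gt0P; exists 0.
have [iota iotaI] : exists iota : 'rV[F]_k -> ({x : 'rV[F]_k | x \in limg f} * 'I_q)%type,
   injective iota.
  apply: card_inj_ex; rewrite card_prod cim card_ord card_mx mul1n -expnD subnKC //.
have [kap kapI] : exists kap : ('I_q * S)%type -> {x : 'rV[F]_m | x \in lker f},
   injective kap.
  apply: card_inj_ex; rewrite card_prod cker card_ord.
  have : (q * #|S| * #|'rV[F]_k| = #|F| ^ \dim (lker f) * #|'rV[F]_k|)%N.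
    rewrite -mulnA HS !card_mx !mul1n /q -!expnD; congr (_ ^ _)%N.
    lia.
  move=> /eqP; rewrite eqn_pmul2r ?card_mx ?expn_gt0 ?F0 // => /eqP ->; done.
pose rep (x : 'rV[F]_k) := odflt 0 [pick u | g u == x].
have repP : forall x, x \in limg f -> g (rep x) = x.
  move=> x /memv_imgP [u _ ->]; rewrite /rep; case: pickP => [v /eqP -> | /(_ u)].
    by rewrite lfunE.
  by rewrite lfunE eqxx.
exists (fun c s => rep (val (iota c).1) + val (kap ((iota c).2, s))).
exists (fun c => val (iota c).1).
have gk : forall p, g (val (kap p)) = 0.
  by move=> p; have := valP (kap p); rewrite memv_ker lfunE => /eqP.
have E1 : forall c s, g (rep (val (iota c).1) + val (kap ((iota c).2, s))) = val (iota c).1.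
  by move=> c s; rewrite linearD gk addr0 repP // (valP (iota c).1).
split=> // c s c' s' E.
have Eg : val (iota c).1 = val (iota c').1 by rewrite -(E1 c s) E E1.
move: E; rewrite Eg => /addrI /val_inj /kapI [E2 ->]; split=> //.
apply: iotaI; move: Eg => /val_inj; case: (iota c) E2 => a b; case: (iota c') => a' b' /= -> ->.
done.
Qed.

Theorem lemma3 (F : finFieldType) (m k : nat) (C : numClosedFieldType)
  (L : nat) (d : 'I_L -> nat)
  (rho : 'rV[F]_m -> op C (full_basis d))
  (Hrho : forall u, density (rho u))
  (AA : {set {set 'I_L}})
  (eps1 eps2 : C)
  (Pt : 'rV[F]_m -> C) (HPt : is_distr Pt)
  (Hclose : vdist Pt (@uniform C 'rV[F]_m) <= eps1)
  (g : {linear 'rV[F]_m -> 'rV[F]_k})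
  (h : forall A : {set 'I_L}, 'rV[F]_k -> 'rV[F]_m -> op C (sub_basis d A))
  (Hh : forall A, A \in AA -> forall c, povm (h A c))
  (Herr : forall A, A \in AA ->
     \sum_(u : 'rV[F]_m) Pt u *
        (\sum_(u' : 'rV[F]_m | u' != u) trmul (h A (g u) u') (ptrace A (rho u)))
     <= eps2)
  (S : finType) (HS : (#|S| * #|'rV[F]_k| = #|'rV[F]_m|)%N) :
  exists (Enc : 'rV[F]_k -> S -> 'rV[F]_m)
         (Dec : forall A : {set 'I_L}, 'rV[F]_k -> S -> op C (sub_basis d A)),
    (forall A, A \in AA -> forall c, povm (Dec A c)) /\
    (forall A, A \in AA ->
       \sum_(c : 'rV[F]_k) (#|'rV[F]_k|%:R)^-1 *
         (\sum_(s : S) (#|S|%:R)^-1 *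
            \sum_(s' : S | s' != s) trmul (Dec A c s') (ptrace A (rho (Enc c s))))
       <= eps1 + eps2).
Proof.
have [psi [gam [hg hinj]]] := @comb F m k g S HS.
have hS : (0 < #|S|)%N.
  have : (0 < #|'rV[F]_m|)%N by apply/card_gt0P; exists 0.
  by rewrite -HS muln_gt0 => /andP [].
have [s0 _] := card_gt0P hS.
pose phi c u := odflt s0 [pick s | psi c s == u].
have phiK : forall c s, phi c (psi c s) = s.
  move=> c s; rewrite /phi; case: pickP => [s' /eqP /hinj [_ ->] // | /(_ s)].
  by rewrite eqxx.
pose Dec (A : {set 'I_L}) c s' : op C (sub_basis d A) :=
  fun i j => \sum_(u | phi c u == s') h A (gam c) u i j.
exists psi, Dec; split.
  move=> A hA c; have [hp hc] := Hh A hA (gam c); split.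
    by move=> s'; apply: psd_sum => u _; apply: hp.
  move=> i j; rewrite -(hc i j) (partition_big (phi c) xpredT) //=.
move=> A hA.
pose e u := \sum_(u' | u' != u) trmul (h A (g u) u') (ptrace A (rho u)).
have tr0 : forall u u', 0 <= trmul (h A (g u) u') (ptrace A (rho u)).
  move=> u u'; apply: key; first exact: (Hh A hA (g u)).1.
  exact: ptrace_psd (Hrho u).1.
have e0 : forall u, 0 <= e u by move=> u; apply: sumr_ge0 => u' _; apply: tr0.
have e1 : forall u, e u <= 1.
  move=> u; have := povm_trsum _ (ptrace A (rho u)) (Hh A hA (g u)).
  rewrite ptrace_tr (Hrho u).2 (bigD1 u) //= => <-.
  by rewrite lerDr tr0.
have errle : forall c s,
    \sum_(s' : S | s' != s) trmul (Dec A c s') (ptrace A (rho (psi c s))) <= e (psi c s).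
  move=> c s.
  under eq_bigr do rewrite trmul_sum.
  set f := fun u => trmul (h A (gam c) u) (ptrace A (rho (psi c s))).
  have -> : \sum_(s' | s' != s) \sum_(u | phi c u == s') f u = \sum_(u | phi c u != s) f u.
    rewrite [RHS](partition_big (phi c) (fun s' => s' != s)) //=.
    apply: eq_bigr => s' hs'; apply: eq_bigl => u.
    by case: (eqVneq (phi c u) s') => [-> | _]; rewrite ?eqxx ?hs' ?andbF.
  rewrite /e hg /f big_mkcond [X in _ <= X]big_mkcond; apply: ler_sum => u _.
  case: (eqVneq u (psi c s)) => [-> | hne]; first by rewrite phiK eqxx.
  rewrite /=; case: ifP => _ //; rewrite -(hg c s); exact: tr0.
pose a := (#|'rV[F]_k|%:R : C)^-1; pose b := (#|S|%:R : C)^-1.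
apply: (le_trans (y := \sum_c a * (\sum_s b * e (psi c s)))).
  apply: ler_sum => c _; apply: ler_wpM2l; first by rewrite invr_ge0 ler0n.
  apply: ler_sum => s _; apply: ler_wpM2l; first by rewrite invr_ge0 ler0n.
  exact: errle.
have -> : \sum_c a * (\sum_s b * e (psi c s)) = (a * b) * \sum_c \sum_s e (psi c s).
  rewrite mulr_sumr; apply: eq_bigr => c _; rewrite !mulr_sumr; apply: eq_bigr => s _.
  by rewrite mulrA.
have -> : a * b = (#|'rV[F]_m|%:R)^-1 by rewrite /a /b -invfM -natrM mulnC HS.
have -> : \sum_c \sum_s e (psi c s) = \sum_u e u.
  rewrite pair_big /= [RHS](reindex (fun p : 'rV[F]_k * S => psi p.1 p.2)) //=.
  apply: onW_bij; apply: inj_card_bij.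
    by move=> [c s] [c' s'] /= /hinj [-> ->].
  by rewrite card_prod -HS mulnC.
have -> : (#|'rV[F]_m|%:R)^-1 * \sum_u e u =
    \sum_u Pt u * e u + \sum_u ((#|'rV[F]_m|%:R)^-1 - Pt u) * e u.
  by rewrite mulr_sumr -big_split; apply: eq_bigr => u _ /=; ring.
rewrite addrC; apply: lerD; last exact: Herr.
apply: le_trans Hclose; rewrite /vdist /uniform; apply: ler_sum => u _.
have xr : ((#|'rV[F]_m|%:R)^-1 - Pt u) \is Num.real.
  apply: rpredB; apply: ger0_real; first by rewrite invr_ge0 ler0n.
  exact: HPt.1.
apply: le_trans (real_ler_norm (rpredM xr (ger0_real (e0 u)))) _.
rewrite normrM (ger0_norm (e0 u)) distrC.
by rewrite -[X in _ <= X]mulr1; apply: ler_wpM2l; [exact: normr_ge0 | exact: e1].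
Qed.
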